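(* Let $L,K\ge1$, let $\mathbf{M}=(m_{l,k})\in\mathbb{R}^{L\times K}$ have all entries strictly positive, and equip $\mathbb{R}^{L\times K}$ with the inner product $\langle\mathbf{Y},\mathbf{Z}\rangle_{\mathbf{M}}=\sum_{l=1}^L\sum_{k=1}^K m_{l,k}y_{l,k}z_{l,k}$ and its norm $\|\cdot\|_{\mathbf{M}}$. Let $\mathcal{H}$ be the subspace of $L\times K$ Hankel matrices and, for an integer $r\ge0$, let $\mathcal{M}_r$ be the set of $L\times K$ matrices of rank at most $r$. Let $\Pi_{\mathcal{H}}$ be the $\|\cdot\|_{\mathbf{M}}$-orthogonal projection onto $\mathcal{H}$ and $\Pi_{\mathcal{M}_r}$ a map assigning to each matrix a $\|\cdot\|_{\mathbf{M}}$-closest point of $\mathcal{M}_r$. For $\mathbf{X}\in\mathbb{R}^{L\times K}$ put $\mathbf{Y}_0=\mathbf{X}$, $\mathbf{Y}_{k+1}=\Pi_{\mathcal{H}}\Pi_{\mathcal{M}_r}\mathbf{Y}_k$. Then $\|\mathbf{Y}_k-\Pi_{\mathcal{M}_r}\mathbf{Y}_k\|_{\mathbf{M}}\to0$, $\|\Pi_{\mathcal{M}_r}\mathbf{Y}_k-\mathbf{Y}_{k+1}\|_{\mathbf{M}}\to0$, and some subsequence of $(\mathbf{Y}_k)$ converges to a Hankel matrix of rank at most $r$.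
   Context: A matrix $(y_{i,j})\in\mathbb{R}^{L\times K}$ is Hankel if $y_{i,j}$ depends only on $i+j$. *)

(* Defs.v *)
From HB Require Import structures.
From Stdlib Require Import Reals ClassicalEpsilon FunctionalExtensionality.
From mathcomp Require Import all_boot all_order all_algebra.

Set Implicit Arguments.
Unset Strict Implicit.
Unset Printing Implicit Defensive.

Definition Req_bool (x y : R) : bool := if Req_EM_T x y then true else false.

Lemma Req_boolP : Equality.axiom Req_bool.
Proof. by move=> x y; rewrite /Req_bool; case: Req_EM_T => H; constructor. Qed.

HB.instance Definition _ := hasDecEq.Build R Req_boolP.

Definition R_find (P : pred R) (n : nat) : option R :=
  match excluded_middle_informative (exists x, P x) with
  | left H => Some (proj1_sig (constructive_indefinite_description _ H))
  | right _ => None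
  end.

Lemma R_find_correct P n x : R_find P n = Some x -> P x.
Proof.
rewrite /R_find; case: excluded_middle_informative => // H [<-].
exact: proj2_sig (constructive_indefinite_description _ H).
Qed.

Lemma R_find_complete (P : pred R) : (exists x, P x) -> exists n, R_find P n.
Proof. by move=> H; exists 0%N; rewrite /R_find; case: excluded_middle_informative. Qed.

Lemma R_find_ext (P Q : pred R) : P =1 Q -> R_find P =1 R_find Q.
Proof. by move=> /functional_extensionality ->. Qed.

HB.instance Definition _ :=
  hasChoice.Build R R_find_correct R_find_complete R_find_ext.

Lemma R_addA : associative Rplus.
Proof. by move=> x y z; rewrite Rplus_assoc. Qed.
Lemma R_addC : commutative Rplus.
Proof. exact: Rplus_comm. Qed.
Lemma R_add0 : left_id R0 Rplus.
Proof. exact: Rplus_0_l. Qed.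
Lemma R_addN : left_inverse R0 Ropp Rplus.
Proof. exact: Rplus_opp_l. Qed.

HB.instance Definition _ := GRing.isZmodule.Build R R_addA R_addC R_add0 R_addN.

Lemma R_mulA : associative Rmult.
Proof. by move=> x y z; rewrite Rmult_assoc. Qed.
Lemma R_mulC : commutative Rmult.
Proof. exact: Rmult_comm. Qed.
Lemma R_mul1 : left_id R1 Rmult.
Proof. exact: Rmult_1_l. Qed.
Lemma R_mulDl : left_distributive Rmult Rplus.
Proof. by move=> x y z; rewrite Rmult_plus_distr_r. Qed.
Lemma R_one_neq0 : R1 != R0.
Proof. by apply/eqP; exact: R1_neq_R0. Qed.

HB.instance Definition _ :=
  GRing.Zmodule_isComNzRing.Build R R_mulA R_mulC R_mul1 R_mulDl R_one_neq0.

Definition R_inv (x : R) : R := if Req_EM_T x R0 then R0 else Rinv x.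

Lemma R_mulVf (x : R) : x != R0 -> Rmult (R_inv x) x = R1.
Proof.
move=> /eqP nx; rewrite /R_inv; destruct (Req_EM_T x R0) as [e|n].
- by case: nx.
- exact: Rinv_l.
Qed.

Lemma R_inv0 : R_inv R0 = R0.
Proof. by rewrite /R_inv; destruct (Req_EM_T R0 R0). Qed.

HB.instance Definition _ := GRing.ComNzRing_isField.Build R R_mulVf R_inv0.

Local Open Scope ring_scope.

Definition inprodM (L K : nat) (M Y Z : 'M[R]_(L, K)) : R :=
  \sum_(l < L) \sum_(k < K) M l k * Y l k * Z l k.

Definition normM (L K : nat) (M Y : 'M[R]_(L, K)) : R := sqrt (inprodM M Y Y).

Definition hankel (L K : nat) (Y : 'M[R]_(L, K)) : Prop :=
  forall (i i' : 'I_L) (j j' : 'I_K),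
    (i + j = i' + j')%N -> Y i j = Y i' j'.

Definition is_orth_proj_hankel (L K : nat) (M : 'M[R]_(L, K))
  (PH : 'M[R]_(L, K) -> 'M[R]_(L, K)) : Prop :=
  forall Y, hankel (PH Y) /\
    (forall Z, hankel Z -> inprodM M (Y - PH Y) Z = 0).

Definition is_nearest_low_rank (L K r : nat) (M : 'M[R]_(L, K))
  (PM : 'M[R]_(L, K) -> 'M[R]_(L, K)) : Prop :=
  forall Y, (\rank (PM Y) <= r)%N /\
    (forall Z : 'M[R]_(L, K), (\rank Z <= r)%N ->
       Rle (normM M (Y - PM Y)) (normM M (Y - Z))).

(* entrywise convergence of a sequence of matrices (= convergence in
   the finite-dimensional space R^{L x K}) *)
Definition mx_cv (L K : nat) (u : nat -> 'M[R]_(L, K)) (A : 'M[R]_(L, K)) : Prop :=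
  forall (i : 'I_L) (j : 'I_K), Un_cv (fun n => u n i j) (A i j).

(* Main.v *)
Require Import Defs.
From HB Require Import structures.
From Stdlib Require Import Reals Lra Lia Psatz ClassicalEpsilon.
From mathcomp Require Import all_boot all_order all_algebra.

Set Implicit Arguments.
Unset Strict Implicit.
Unset Printing Implicit Defensive.

Section HA.
Local Open Scope R_scope.

Lemma Un_cv_ext (u v : nat -> R) l : (forall n, u n = v n) -> Un_cv u l -> Un_cv v l.
Proof. move=> H Hu e He; case: (Hu e He) => N HN; exists N => n Hn; rewrite -H; auto. Qed.

Lemma Un_cv_ev (u v : nat -> R) l : (forall n, (1 <= n)%coq_nat -> u n = v n) -> Un_cv u l -> Un_cv v l.
Proof.
move=> H Hu e He; case: (Hu e He) => N HN; exists (Nat.max N 1) => n Hn.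
rewrite -H; [apply: HN|]; lia.
Qed.

Lemma Un_cv_const c : Un_cv (fun _ => c) c.
Proof. move=> e He; exists 0%nat => n _; rewrite /R_dist Rminus_diag Rabs_R0; lra. Qed.

Lemma Un_cv_shift (u : nat -> R) l : Un_cv u l -> Un_cv (fun n => u (S n)) l.
Proof. move=> Hu e He; case: (Hu e He) => N HN; exists N => n Hn; apply: HN; lia. Qed.

Lemma incr_ge (phi : nat -> nat) : (forall n, (phi n < phi n.+1)%N) -> forall n, (n <= phi n)%N.
Proof. move=> H; elim=> [|n IH] //; exact: leq_ltn_trans IH (H n). Qed.

Lemma Un_cv_sub (u : nat -> R) l (phi : nat -> nat) :
  (forall n, (phi n < phi n.+1)%N) -> Un_cv u l -> Un_cv (fun n => u (phi n)) l.
Proof.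
move=> Hp Hu e He; case: (Hu e He) => N HN; exists N => n Hn; apply: HN.
have := incr_ge Hp n => /leP; lia.
Qed.

Lemma Un_cv_squeeze0 (u v : nat -> R) :
  (forall n, 0 <= u n <= v n) -> Un_cv v 0 -> Un_cv u 0.
Proof.
move=> H Hv e He; case: (Hv e He) => N HN; exists N => n Hn.
have := HN n Hn; have := H n; rewrite /R_dist !Rminus_0_r.
move=> [h1 h2]; rewrite !Rabs_right; lra.
Qed.

Lemma Un_cv_sqrt0 (u : nat -> R) : Un_cv u 0 -> Un_cv (fun n => sqrt (u n)) 0.
Proof.
move=> Hu e He; case: (Hu (e*e) ltac:(nra)) => N HN; exists N => n Hn.
have := HN n Hn; rewrite /R_dist !Rminus_0_r => h.
rewrite Rabs_right; last by apply: Rle_ge; apply: sqrt_pos.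
case: (Rle_lt_dec (u n) 0) => hu.
  rewrite sqrt_neg_0 //.
rewrite Rabs_right in h; last lra.
rewrite -(sqrt_square e); last lra.
apply: sqrt_lt_1; lra.
Qed.

Lemma quad_cs A B C : 0 <= C -> (forall t, 0 <= A + 2*t*B + t^2*C) -> B^2 <= A*C.
Proof.
move=> HC H.
have HA := H 0.
case: (Rle_lt_dec C 0) => hC.
  have C0 : C = 0 by lra.
  subst C.
  case: (Req_dec B 0) => hB; first (subst B; nra).
  have := H (-(A+1)/(2*B)).
  have -> : A + 2 * (- (A + 1) / (2 * B)) * B + (- (A + 1) / (2 * B)) ^ 2 * 0 = -1 by field.
  lra.
have := H (-B/C).
have -> : A + 2 * (- B / C) * B + (- B / C) ^ 2 * C = (A*C - B^2)/C by field; lra.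
move=> h.
have : 0 <= (A * C - B ^ 2) / C * C by apply: Rmult_le_pos; lra.
have -> : (A * C - B ^ 2) / C * C = A*C - B^2 by field; lra.
lra.
Qed.

Lemma BW1 (u : nat -> R) (C : R) : (forall n, Rabs (u n) <= C) ->
  exists phi : nat -> nat, exists l, (forall n, (phi n < phi n.+1)%N) /\ Un_cv (fun n => u (phi n)) l.
Proof.
move=> Hb.
have [l Hl] : exists l, ValAdh u l.
  apply: (Bolzano_Weierstrass u (fun c => -C <= c <= C) (compact_P3 (-C) C)).
  by move=> n; have := Hb n; move: (u n) => x; split_Rabs; lra.
have ex : forall N k, exists p, (N <= p)%coq_nat /\ Rabs (u p - l) < / INR (S k).
  move=> N k.
  have pos : 0 < / INR (S k) by apply: Rinv_0_lt_compat; apply: lt_0_INR; lia.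
  have [p [h1 h2]] := Hl (disc l (mkposreal _ pos)) N
     (ex_intro _ (mkposreal _ pos) (fun y h => h)).
  by exists p.
pose nxt (N k : nat) : nat := proj1_sig (constructive_indefinite_description _ (ex N k)).
have nxtP : forall N k, (N <= nxt N k)%coq_nat /\ Rabs (u (nxt N k) - l) < / INR (S k).
  by move=> N k; rewrite /nxt; case: constructive_indefinite_description.
pose phi := fix phi (n : nat) : nat := match n with 0 => nxt 0%nat 0%nat | S m => nxt (S (phi m)) (S m) end.
exists phi, l; split.
  move=> n /=; apply/ltP; have := proj1 (nxtP (S (phi n)) (S n)); lia.
move=> e He.
have [N HN] := archimed_cor1 e He.
exists N => n Hn; rewrite /R_dist.
have h : Rabs (u (phi n) - l) < / INR (S n).
  by case: n Hn => [|n] Hn /=; apply nxtP.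
apply: Rlt_le_trans h _.
apply: Rle_trans (Rlt_le _ _ (proj1 HN)).
apply: Rinv_le_contravar; first by apply: lt_0_INR; lia.
apply: le_INR; lia.
Qed.
Lemma BWseq (L K : nat) (u : nat -> 'I_L -> 'I_K -> R) (C : 'I_L -> 'I_K -> R) :
  (forall n i j, Rabs (u n i j) <= C i j) -> forall s : seq ('I_L * 'I_K),
  exists phi : nat -> nat, (forall n, (phi n < phi n.+1)%N) /\
    forall p, p \in s -> exists l, Un_cv (fun n => u (phi n) p.1 p.2) l.
Proof.
move=> Hb; elim=> [|x s [phi [Hphi Hs]]].
  by exists id; split.
have [psi [l [Hpsi Hl]]] := BW1 (u := fun n => u (phi n) x.1 x.2) (C := C x.1 x.2) (fun n => Hb _ _ _).
exists (fun n => phi (psi n)); split.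
  move=> n; have h1 := Hpsi n.
  have mono : forall a b, (a < b)%N -> (phi a < phi b)%N.
    move=> a b; elim: b => [//|b IH]; rewrite ltnS leq_eqVlt => /orP [/eqP ->|h].
      exact: Hphi.
    exact: ltn_trans (IH h) (Hphi b).
  exact: mono.
move=> p; rewrite in_cons => /orP [/eqP ->|hp].
  by exists l.
have [l' Hl'] := Hs p hp; exists l'.
exact: (Un_cv_sub (u := fun n => u (phi n) p.1 p.2)).
Qed.
End HA.

From mathcomp Require Import ring.
Import GRing.Theory.

Section HB.
Local Open Scope R_scope.
Lemma addRE (x y : R) : GRing.add x y = Rplus x y. Proof. by []. Qed.
Lemma mulRE (x y : R) : GRing.mul x y = Rmult x y. Proof. by []. Qed.
Lemma oppRE (x : R) : GRing.opp x = Ropp x. Proof. by []. Qed.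
Lemma zeroRE : @GRing.zero R = R0. Proof. by []. Qed.
Lemma oneRE : @GRing.one R = R1. Proof. by []. Qed.

Local Open Scope ring_scope.
Lemma twoRE : (2%:R : R) = Rplus R1 R1.
Proof. by rewrite mulr2n. Qed.
Lemma sum_ge0 (I : Type) (r : seq I) (P : pred I) (F : I -> R) :
  (forall i, P i -> Rle 0 (F i)) -> Rle 0 (\sum_(i <- r | P i) F i).
Proof.
move=> H; apply: (big_ind (fun x => Rle 0 x)); first by rewrite zeroRE; lra.
  by move=> x y hx hy; rewrite addRE; lra.
exact: H.
Qed.

Lemma sum_ge_term (n : nat) (F : 'I_n -> R) (i : 'I_n) :
  (forall j, Rle 0 (F j)) -> Rle (F i) (\sum_(j < n) F j).
Proof.
move=> H; rewrite (bigD1 i) //= addRE.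
rewrite -{1}(Rplus_0_r (F i)); apply: Rplus_le_compat_l.
by apply: sum_ge0 => j _; apply: H.
Qed.

Section IP.
Variables (L K : nat) (M : 'M[R]_(L, K)).
Hypothesis hM : forall (l : 'I_L) (k : 'I_K), Rlt 0 (M l k).
Local Notation ip := (inprodM M).
Local Notation nn Y := (inprodM M Y Y).

Local Open Scope ring_scope.

Lemma ip_sym Y Z : ip Y Z = ip Z Y.
Proof. by rewrite /inprodM; apply: eq_bigr => i _; apply: eq_bigr => j _; ring. Qed.

Lemma ipDl Y Z W : ip (Y + Z) W = ip Y W + ip Z W.
Proof.
rewrite /inprodM -big_split; apply: eq_bigr => i _.
rewrite -big_split; apply: eq_bigr => j _; rewrite !mxE /=; ring.
Qed.

Lemma ipNl Y W : ip (- Y) W = - ip Y W.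
Proof.
rewrite /inprodM -sumrN; apply: eq_bigr => i _.
rewrite -sumrN; apply: eq_bigr => j _; rewrite !mxE /=; ring.
Qed.

Lemma ipZl a Y W : ip (a *: Y) W = a * ip Y W.
Proof.
rewrite /inprodM mulr_sumr; apply: eq_bigr => i _.
rewrite mulr_sumr; apply: eq_bigr => j _; rewrite !mxE /=; ring.
Qed.

Lemma ipBl Y Z W : ip (Y - Z) W = ip Y W - ip Z W.
Proof. by rewrite ipDl ipNl. Qed.

Lemma ipDr Y Z W : ip W (Y + Z) = ip W Y + ip W Z.
Proof. by rewrite ip_sym ipDl !(ip_sym W). Qed.
Lemma ipNr Y W : ip W (- Y) = - ip W Y.
Proof. by rewrite ip_sym ipNl ip_sym. Qed.
Lemma ipBr Y Z W : ip W (Y - Z) = ip W Y - ip W Z.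
Proof. by rewrite ipDr ipNr. Qed.
Lemma ipZr a Y W : ip W (a *: Y) = a * ip W Y.
Proof. by rewrite ip_sym ipZl ip_sym. Qed.

Lemma nn_ge0 Y : Rle 0 (nn Y).
Proof.
apply: sum_ge0 => i _; apply: sum_ge0 => j _.
rewrite !mulRE; have := hM i j; nra.
Qed.

Lemma nn_entry (Y : 'M[R]_(L, K)) i j : Rle (M i j * (Y i j * Y i j)) (nn Y).
Proof.
have h : forall i j, Rle 0 (M i j * Y i j * Y i j) by move=> a b; have := hM a b; nra.
apply: Rle_trans (sum_ge_term (F := fun i => \sum_(j < K) M i j * Y i j * Y i j) i _).
  rewrite -Rmult_assoc.
  exact: (sum_ge_term (F := fun j => M i j * Y i j * Y i j)).
by move=> a; apply: sum_ge0 => b _; apply: h.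
Qed.

Lemma nnD Y Z : nn (Y + Z) = nn Y + 2%:R * ip Y Z + nn Z.
Proof. rewrite ipDl !ipDr (ip_sym Z Y); ring. Qed.

Lemma nnN Y : nn (- Y) = nn Y.
Proof. by rewrite ipNl ipNr opprK. Qed.

Lemma cauchy_schwarz Y Z : Rle (Rsqr (ip Y Z)) (Rmult (nn Y) (nn Z)).
Proof.
suff h : Rle (ip Y Z ^ 2) (Rmult (nn Y) (nn Z)) by rewrite /Rsqr; move: h; rewrite /= Rmult_1_r.
apply: (@quad_cs (nn Y) (ip Y Z) (nn Z) (nn_ge0 Z)) => t.
have := nn_ge0 (Y + t *: Z); rewrite nnD ipZr ipZl ipZr.
rewrite twoRE !mulRE !addRE; move=> h; nra.
Qed.

End IP.

Lemma cv_sum (I : Type) (r : seq I) (P : pred I) (f : nat -> I -> R) (g : I -> R) :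
  (forall i, Un_cv (fun n => f n i) (g i)) ->
  Un_cv (fun n => \sum_(i <- r | P i) f n i) (\sum_(i <- r | P i) g i).
Proof.
move=> H; elim: r => [|x r IH].
  apply: (Un_cv_ext (u := fun _ => \sum_(i <- [::] | P i) g i)); last exact: Un_cv_const.
  by move=> n; rewrite !big_nil.
rewrite big_cons.
apply: (Un_cv_ext (u := fun n => if P x then f n x + \sum_(i <- r | P i) f n i
                              else \sum_(i <- r | P i) f n i)).
  by move=> n; rewrite big_cons.
case: (P x) => //; exact: CV_plus.
Qed.

Lemma cv_prod (I : Type) (r : seq I) (P : pred I) (f : nat -> I -> R) (g : I -> R) :
  (forall i, Un_cv (fun n => f n i) (g i)) ->
  Un_cv (fun n => \prod_(i <- r | P i) f n i) (\prod_(i <- r | P i) g i).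
Proof.
move=> H; elim: r => [|x r IH].
  apply: (Un_cv_ext (u := fun _ => \prod_(i <- [::] | P i) g i)); last exact: Un_cv_const.
  by move=> n; rewrite !big_nil.
rewrite big_cons.
apply: (Un_cv_ext (u := fun n => if P x then f n x * \prod_(i <- r | P i) f n i
                              else \prod_(i <- r | P i) f n i)).
  by move=> n; rewrite big_cons.
case: (P x) => //; exact: CV_mult.
Qed.

Lemma cv_det n (F : nat -> 'M[R]_n) (G : 'M[R]_n) :
  (forall i j, Un_cv (fun k => F k i j) (G i j)) -> Un_cv (fun k => \det (F k)) (\det G).
Proof.
move=> H; rewrite /determinant; apply: cv_sum => s.
apply: CV_mult; first exact: Un_cv_const.
by apply: cv_prod => i; apply: H.
Qed.

Lemma rank_closed L K r (B : nat -> 'M[R]_(L, K)) (A : 'M[R]_(L, K)) :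
  (forall n, \rank (B n) <= r)%N -> (forall i j, Un_cv (fun n => B n i j) (A i j)) ->
  (\rank A <= r)%N.
Proof.
move=> HB HA; rewrite leqNgt; apply/negP => hr.
pose f := maxrankfun A.
have hf : row_free (rowsub f A) := maxrowsub_free A.
have hfull : row_full (rowsub f A)^T by rewrite /row_full mxrank_tr.
pose g := fullrankfun hfull.
pose S (X : 'M[R]_(L, K)) : 'M[R]_(\rank A) := rowsub g (rowsub f X)^T.
have hu : S A \in unitmx := fullrowsub_unit hfull.
have hdet : \det (S A) != 0 by rewrite -unitfE -unitmxE.
have h0 : forall n, \det (S (B n)) = 0.
  move=> n; apply/eqP; case: (boolP (\det (S (B n)) == 0)) => // hn; exfalso.
  suff : (\rank A <= r)%N by rewrite leqNgt hr.
  have hun : S (B n) \in unitmx by rewrite unitmxE unitfE.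
  have := mxrank_unit hun => <-.
  apply: leq_trans (HB n).
  apply: leq_trans (mxrankS (rowsub_sub g _)) _.
  rewrite mxrank_tr.
  exact: mxrankS (rowsub_sub f _).
have hcv : Un_cv (fun n => \det (S (B n))) (\det (S A)).
  by apply: cv_det => i j; rewrite !mxE; apply: (Un_cv_ext (u := fun n => B n (f j) (g i))) => [n|]; [rewrite !mxE|apply: HA].
have := UL_sequence _ _ _ hcv (Un_cv_ext (u := fun _ => 0) (fun n => esym (h0 n)) (Un_cv_const 0)).
by move/eqP; rewrite (negPf hdet).
Qed.

Lemma Un_cv_unshift (u : nat -> R) l : Un_cv (fun n => u n.+1) l -> Un_cv u l.
Proof. move=> Hu e He; case: (Hu e He) => N HN; exists N.+1 => n Hn.
case: n Hn => [|n] Hn; first lia. apply: HN; lia. Qed.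

Lemma Un_cv_sq0 (z : nat -> R) : Un_cv (fun n => Rmult (z n) (z n)) 0 -> Un_cv z 0.
Proof.
move=> Hz e He; case: (Hz (Rmult e e) ltac:(nra)) => N HN; exists N => n Hn.
have := HN n Hn; rewrite /R_dist !Rminus_0_r => h.
have h2 : Rlt (Rmult (z n) (z n)) (Rmult e e) by move: h; split_Rabs; nra.
split_Rabs; nra.
Qed.

Section Main.
Variables (L K r : nat) (M : 'M[R]_(L, K)).
Hypothesis hM : forall (l : 'I_L) (k : 'I_K), Rlt 0 (M l k).
Variables (PH PM : 'M[R]_(L, K) -> 'M[R]_(L, K)).
Hypothesis hPH : is_orth_proj_hankel M PH.
Hypothesis hPM : is_nearest_low_rank r M PM.
Local Notation ip := (inprodM M).
Local Notation nn Y := (inprodM M Y Y).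

Lemma hankelB (A B : 'M[R]_(L, K)) : hankel A -> hankel B -> hankel (A - B).
Proof. by move=> hA hB i i' j j' e; rewrite !mxE (hA _ _ _ _ e) (hB _ _ _ _ e). Qed.

Lemma optPM Z W : (\rank W <= r)%N -> Rle (nn (Z - PM Z)) (nn (Z - W)).
Proof.
move=> hW; have := proj2 (hPM Z) W hW; rewrite /normM => h.
apply: sqrt_le_0 => //; exact: nn_ge0.
Qed.

Lemma orthPM Z : ip (Z - PM Z) (PM Z) = 0.
Proof.
have H : forall s, Rle (IZR 0) (Rplus (Rplus (IZR 0) (Rmult (Rmult (IZR 2) s) (ip (Z - PM Z) (PM Z))))
                     (Rmult (pow s 2) (nn (PM Z)))).
  move=> s.
  have hr : (\rank ((1 - s) *: PM Z) <= r)%N.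
    apply: leq_trans (proj1 (hPM Z)); apply: mxrankS; exact: scalemx_sub.
  have := optPM Z hr.
  have -> : Z - (1 - s) *: PM Z = (Z - PM Z) + s *: PM Z.
    by apply/matrixP => i j; rewrite !mxE /=; ring.
  rewrite (@nnD _ _ M (Z - PM Z)) !ipZr !ipZl twoRE !mulRE !addRE => h; simpl; nra.
have := quad_cs (nn_ge0 hM (PM Z)) H.
move=> h; simpl in h; rewrite ?zeroRE; nra.
Qed.

Lemma nn_PM Z : nn Z = Rplus (nn (PM Z)) (nn (Z - PM Z)).
Proof.
have -> : nn Z = nn ((Z - PM Z) + PM Z) by rewrite subrK.
rewrite nnD orthPM.
rewrite twoRE !mulRE !addRE ?zeroRE; lra.
Qed.

Lemma nn_PH Z : nn Z = Rplus (nn (PH Z)) (nn (Z - PH Z)).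
Proof.
have -> : nn Z = nn ((Z - PH Z) + PH Z) by rewrite subrK.
rewrite nnD (proj2 (hPH Z) _ (proj1 (hPH Z))).
rewrite twoRE !mulRE !addRE ?zeroRE; lra.
Qed.


Lemma main_aux (X : 'M[R]_(L, K)) :
  let Y := fun n : nat => iter n (fun Z => PH (PM Z)) X in
  Un_cv (fun n => normM M (Y n - PM (Y n))%R) 0 /\
  Un_cv (fun n => normM M (PM (Y n) - Y n.+1)%R) 0 /\
  exists (phi : nat -> nat) (A : 'M[R]_(L, K)),
    (forall n, (phi n < phi n.+1)%N) /\
    mx_cv (fun n => Y (phi n)) A /\
    hankel A /\ (\rank A <= r)%N.
Proof.
move=> Y.
have YS n : Y n.+1 = PH (PM (Y n)) by [].
have Yh n : (0 < n)%N -> hankel (Y n) by case: n => // n _; rewrite YS; exact: (proj1 (hPH _)).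
have Ybd n : Rle (nn (Y n)) (nn X).
  elim: n => [|n IH]; first exact: Rle_refl.
  rewrite YS; apply: Rle_trans IH.
  have h1 := nn_PH (PM (Y n)); have h2 := nn_PM (Y n).
  have := nn_ge0 hM (PM (Y n) - PH (PM (Y n))); have := nn_ge0 hM (Y n - PM (Y n)).
  lra.
pose d2 n := nn (Y n - PM (Y n)).
pose e2 n := nn (PM (Y n) - Y n.+1).
pose D n := nn (Y n.+1 - Y n).
have d2ge n : Rle R0 (d2 n) by apply: nn_ge0.
have e2ge n : Rle R0 (e2 n) by apply: nn_ge0.
have Dge n : Rle R0 (D n) by apply: nn_ge0.
have pyth n : (0 < n)%N -> d2 n = Rplus (e2 n) (D n).
  move=> hn; rewrite /d2 /e2 /D.
  have -> : Y n - PM (Y n) = - ((PM (Y n) - Y n.+1) + (Y n.+1 - Y n)).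
    by apply/matrixP => i j; rewrite !mxE /=; ring.
  rewrite nnN nnD.
  have -> : ip (PM (Y n) - Y n.+1) (Y n.+1 - Y n) = 0.
    rewrite YS; apply: (proj2 (hPH _)); rewrite -YS; apply: hankelB; [exact: Yh|exact: Yh].
  rewrite twoRE !mulRE !addRE ?zeroRE; lra.
have dec n : Rle (d2 n.+1) (e2 n).
  rewrite /d2 /e2; apply: Rle_trans (optPM _ (proj1 (hPM (Y n)))) _.
  by rewrite -nnN opprB; apply: Rle_refl.
have ident n : (0 < n)%N -> d2 n = ip (Y n - Y n.+1) (Y n).
  move=> hn.
  have -> : Y n - Y n.+1 = (Y n - PM (Y n)) + (PM (Y n) - Y n.+1).
    by apply/matrixP => i j; rewrite !mxE /=; ring.
  rewrite ipDl.
  have -> : ip (PM (Y n) - Y n.+1) (Y n) = 0.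
    rewrite YS; apply: (proj2 (hPH _)); exact: Yh.
  have -> : ip (Y n - PM (Y n)) (Y n) = ip (Y n - PM (Y n)) ((Y n - PM (Y n)) + PM (Y n)).
    by rewrite subrK.
  rewrite ipDr orthPM /d2 !addRE ?zeroRE; lra.
have CS n : (0 < n)%N -> Rle (Rmult (d2 n) (d2 n)) (Rmult (D n) (nn X)).
  move=> hn; rewrite (ident n hn).
  apply: Rle_trans (cauchy_schwarz hM _ _) _.
  rewrite -nnN opprB.
  apply: Rmult_le_compat_l; [exact: Dge|exact: Ybd].
pose u k := d2 k.+1.
have udec : Un_decreasing u.
  move=> k; rewrite /u; apply: Rle_trans (dec k.+1) _.
  rewrite (pyth k.+1 isT); have := Dge k.+1; lra.
have ulb : has_lb u.
  exists R0 => x [i ->]; rewrite /opp_seq /u; have := d2ge i.+1; lra.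
have [l ul] := decreasing_cv u udec ulb.
have Dcv : Un_cv (fun k => D k.+1) 0.
  apply: (Un_cv_squeeze0 (v := fun k => Rminus (u k) (u k.+1))).
    move=> k; split; first exact: Dge.
    rewrite /u; have := dec k.+1; rewrite (pyth k.+1 isT); lra.
  have := CV_minus _ _ _ _ ul (Un_cv_shift ul).
  by rewrite Rminus_diag.
have d2cv : Un_cv d2 0.
  apply: Un_cv_unshift.
  apply: (Un_cv_squeeze0 (v := fun k => sqrt (Rmult (D k.+1) (nn X)))).
    move=> k; split; first exact: d2ge.
    rewrite -(sqrt_square (d2 k.+1)); last exact: d2ge.
    apply: sqrt_le_1_alt; exact: CS.
  apply: Un_cv_sqrt0.
  have := CV_mult _ _ _ _ Dcv (Un_cv_const (nn X)).
  by rewrite Rmult_0_l.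
have e2cv : Un_cv e2 0.
  apply: Un_cv_unshift.
  apply: (Un_cv_squeeze0 (v := fun k => d2 k.+1)).
    move=> k; split; first exact: e2ge.
    rewrite (pyth k.+1 isT); have := Dge k.+1; lra.
  exact: (Un_cv_shift d2cv).
split; first exact: (Un_cv_sqrt0 d2cv).
split.
  apply: (Un_cv_sqrt0 e2cv).
have bnd : forall n i j, Rle (Rabs (Y n i j)) (Rplus 1 (Rdiv (nn X) (M i j))).
  move=> n i j.
  have hm := hM i j.
  have h1 := Rle_trans _ _ _ (nn_entry hM (Y n) i j) (Ybd n).
  have h2 : Rle (Rmult (Y n i j) (Y n i j)) (Rdiv (nn X) (M i j)).
    apply: (Rmult_le_reg_l (M i j)) => //.
    have -> : Rmult (M i j) (Rdiv (nn X) (M i j)) = nn X.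
      by rewrite /Rdiv -Rmult_assoc (Rmult_comm (M i j)) Rmult_assoc Rinv_r ?Rmult_1_r //; lra.
    exact: h1.
  move: h2; move: (Y n i j) => y h2.
  split_Rabs; nra.
have [phi [Hphi Hs]] := BWseq bnd (enum {: 'I_L * 'I_K}).
have ex : forall i j, exists l, Un_cv (fun n => Y (phi n) i j) l.
  by move=> i j; apply: (Hs (i, j)); rewrite mem_enum.
pose A := \matrix_(i < L, j < K) proj1_sig (constructive_indefinite_description _ (ex i j)).
have Acv : mx_cv (fun n => Y (phi n)) A.
  move=> i j; rewrite mxE.
  by case: constructive_indefinite_description.
exists phi, A; split; first exact: Hphi.
split; first exact: Acv.
split.
  move=> i i' j j' e.
  apply: (UL_sequence (fun n => Y (phi n) i' j')); last exact: Acv.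
  apply: (Un_cv_ev (u := fun n => Y (phi n) i j)); last exact: Acv.
  move=> n hn; apply: (Yh (phi n)) => //.
  have := incr_ge Hphi n; move/leP: hn => hn /leP h; apply/leP; lia.
apply: (rank_closed (B := fun n => PM (Y (phi n)))).
  by move=> n; exact: (proj1 (hPM _)).
move=> i j.
have zcv : Un_cv (fun n => (Y (phi n) - PM (Y (phi n))) i j) 0.
  apply: Un_cv_sq0.
  apply: (Un_cv_squeeze0 (v := fun n => Rdiv (d2 (phi n)) (M i j))).
    move=> n; split; first by move: ((Y (phi n) - PM (Y (phi n))) i j) => z; nra.
    have hm := hM i j.
    apply: (Rmult_le_reg_l (M i j)) => //.
    have -> : Rmult (M i j) (Rdiv (d2 (phi n)) (M i j)) = d2 (phi n).
      by rewrite /Rdiv -Rmult_assoc (Rmult_comm (M i j)) Rmult_assoc Rinv_r ?Rmult_1_r //; lra.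
    exact: nn_entry.
  have := CV_mult _ _ _ _ (Un_cv_sub Hphi d2cv) (Un_cv_const (Rinv (M i j))).
  by rewrite Rmult_0_l.
have := CV_minus _ _ _ _ (Acv i j) zcv.
rewrite Rminus_0_r; apply: Un_cv_ext => n.
by rewrite !mxE /= !addRE !oppRE; lra.
Qed.

End Main.

End HB.

Theorem mainTheorem3 (L K r : nat) (hL : (0 < L)%N) (hK : (0 < K)%N)
  (M : 'M[R]_(L, K)) (hM : forall (l : 'I_L) (k : 'I_K), Rlt 0 (M l k))
  (PH PM : 'M[R]_(L, K) -> 'M[R]_(L, K))
  (hPH : is_orth_proj_hankel M PH)
  (hPM : is_nearest_low_rank r M PM)
  (X : 'M[R]_(L, K)) :
  let Y := fun n : nat => iter n (fun Z => PH (PM Z)) X in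
  Un_cv (fun n => normM M (Y n - PM (Y n))%R) 0 /\
  Un_cv (fun n => normM M (PM (Y n) - Y n.+1)%R) 0 /\
  exists (phi : nat -> nat) (A : 'M[R]_(L, K)),
    (forall n, (phi n < phi n.+1)%N) /\
    mx_cv (fun n => Y (phi n)) A /\
    hankel A /\ (\rank A <= r)%N.
Proof.
exact: (main_aux hM hPH hPM X).
Qed.
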